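(* Let $u=u_1\cdots u_n$ be a word over a finite alphabet and let $s$ be a nonempty factor of $u$. Let $\mathit{first}(s)$ and $\mathit{last}(s)$ be the smallest and the largest starting positions of occurrences of $s$ in $u$. Then $s$ is a border seed of $u$ if and only if $$|s|\ \ge\ \max\Big(\mathrm{per}\big(u[1 .. \mathit{first}(s)+|s|-1]\big),\ \mathrm{per}\big(u[\mathit{last}(s) .. n]\big)\Big).$$
   Context: Positions in a word $u$ are numbered $1,\dots,|u|$; $u[i..j]=u_i\cdots u_j$ is a factor. For a nonempty word $x$, $\mathrm{per}(x)$ is the smallest positive integer $p$ such that $x_i=x_{i+p}$ for all $1\le i\le |x|-p$. A word $s$ covers a word $w$ if every position of $w$ lies inside some occurrence of $s$ as a factor of $w$. A word $s$ is a seed of $u$ if $s$ is a factor of $u$ and $u$ is a factor of some word $w$ covered by $s$. For a factor $s$ of $u$, decompose $u=w_1w_2w_3$ where $w_2=u[\mathit{first}(s) .. \mathit{last}(s)+|s|-1]$ (the longest factor of $u$ having $s$ as a border); $s$ is called a border seed of $u$ if $s$ is a seed of the word $w_1\, s\, w_3$. *)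

(* Defs.v *)
From mathcomp Require Import all_boot.
Set Implicit Arguments. Unset Strict Implicit. Unset Printing Implicit Defensive.

(* Words are sequences over a finite alphabet A (a finType).
   Internally, 0-based indices; the paper's 1-based conventions are
   reproduced by [factor], [firstpos], [lastpos]. *)

Section Words.
Variable A : finType.

(* u[i..j] with 1-based positions i, j (empty if j < i). *)
Definition factor (u : seq A) (i j : nat) : seq A := take (j.+1 - i) (drop i.-1 u).

Definition periodb (x : seq A) (p : nat) : bool :=
  (0 < p) && all (fun i => onth x i == onth x (i + p)) (iota 0 (size x - p)).

Lemma period_exists (x : seq A) : exists p, periodb x p.
Proof.
exists (size x).+1; rewrite /periodb /=.
by have -> : size x - (size x).+1 = 0 by apply/eqP; rewrite subn_eq0 leqnSn.
Qed.

Definition per (x : seq A) : nat := ex_minn (period_exists x).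

Definition occurs_at (w s : seq A) (i : nat) : bool :=
  (i + size s <= size w) && (take (size s) (drop i w) == s).

Definition covers (s w : seq A) : Prop :=
  forall j, j < size w -> exists i, occurs_at w s i /\ i <= j < i + size s.

Definition seed (s u : seq A) : Prop :=
  infix s u /\ exists w : seq A, infix u w /\ covers s w.

Definition firstpos (u s : seq A) : nat :=
  (find (occurs_at u s) (iota 0 (size u).+1)).+1.
Definition lastpos (u s : seq A) : nat :=
  (\max_(i < (size u).+1 | occurs_at u s i) (i : nat)).+1.

(* u = w1 w2 w3 with w2 = u[first(s) .. last(s)+|s|-1];
   s is a border seed of u iff s is a seed of w1 s w3. *)
Definition border_seed (s u : seq A) : Prop :=
  let w1 := factor u 1 (firstpos u s).-1 in
  let w3 := factor u (lastpos u s + size s) (size u) in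
  seed s (w1 ++ s ++ w3).

End Words.

(* Main.v *)
Require Import Defs.
From mathcomp Require Import all_boot zify.
Set Implicit Arguments. Unset Strict Implicit. Unset Printing Implicit Defensive.

Section W.
Variables (A : finType) (x0 : A).

Lemma occP (w s : seq A) i : occurs_at w s i <->
  (i + size s <= size w /\ forall k, k < size s -> nth x0 w (i+k) = nth x0 s k).
Proof.
rewrite /occurs_at; split.
- case/andP => H /eqP E; split => // k Hk.
  by rewrite -E nth_take // nth_drop.
- case=> H E; rewrite H /=.
  have Hsz : size (take (size s) (drop i w)) = size s.
    by rewrite size_take size_drop; case: ltnP => // ?; lia.
  apply/eqP; apply: (eq_from_nth (x0:=x0) Hsz) => k; rewrite Hsz => Hk.
  by rewrite nth_take // nth_drop E.
Qed.

Lemma onth_in (x : seq A) i : i < size x -> onth x i = Some (nth x0 x i).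
Proof. by move=> Hi; rewrite onthE (nth_map x0). Qed.

Lemma perP (x : seq A) p : periodb x p <->
  (0 < p /\ forall i, i + p < size x -> nth x0 x i = nth x0 x (i+p)).
Proof.
rewrite /periodb; split.
- case/andP => Hp /allP H; split => // i Hi.
  have := H i; rewrite mem_iota add0n => /(_ ltac:(apply/andP; split; lia)) /eqP E.
  by move: E; rewrite (onth_in (i:=i)) ?(onth_in (i:=i+p)) //; [case | lia].
- case=> Hp H; rewrite Hp /=; apply/allP => i; rewrite mem_iota add0n => /andP[_ Hi].
  have Hi1 : i < size x by lia.
  have Hi2 : i + p < size x by lia.
  by rewrite (onth_in Hi1) (onth_in Hi2) H.
Qed.

Lemma perle (x : seq A) k : per x <= k <-> exists p, periodb x p /\ p <= k.
Proof.
rewrite /per; case: ex_minnP => m Pm Hmin; split.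
- by move=> H; exists m.
- by case=> p [Pp Hp]; apply: leq_trans (Hmin _ Pp) Hp.
Qed.

Lemma per_mod (x : seq A) p : periodb x p -> forall i, i < size x ->
  nth x0 x i = nth x0 x (i %% p).
Proof.
move/perP => [Hp H] i; elim: i {-2}i (leqnn i) => [|n IH] i Hi Hs.
  by have -> : i = 0 by [lia]; rewrite mod0n.
case: (ltnP i p) => Hip; first by rewrite modn_small.
have E : i = (i - p) + p by lia.
rewrite E -H; last by lia.
rewrite IH; [|lia|lia].
by rewrite modnDr.
Qed.

Lemma per_eqmod (x : seq A) p : periodb x p -> forall i j, i < size x -> j < size x ->
  i %% p = j %% p -> nth x0 x i = nth x0 x j.
Proof. by move=> Hp i j Hi Hj E; rewrite (per_mod Hp Hi) (per_mod Hp Hj) E. Qed.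


Lemma per_drop (x : seq A) p n : periodb x p -> periodb (drop n x) p.
Proof.
move/perP=> [Hp H]; apply/perP; split => // i; rewrite size_drop => Hi.
rewrite !nth_drop addnA; apply: H; lia.
Qed.

Lemma per_take (x : seq A) p n : periodb x p -> periodb (take n x) p.
Proof.
move/perP=> [Hp H]; apply/perP; split => // i; rewrite size_take => Hi.
have Hn : i + p < n by move: Hi; case: (ltnP n (size x)) => ? ?; lia.
rewrite !nth_take; [|lia|lia]; apply: H; move: Hi; case: (ltnP n (size x)) => ? ?; lia.
Qed.

Lemma occ_cat (P x Q s : seq A) i : occurs_at x s i ->
  occurs_at (P ++ x ++ Q) s (size P + i).
Proof.
move/occP=> [H E]; apply/occP; rewrite !size_cat; split; first lia.
move=> k Hk; rewrite nth_cat ifF; last by apply/negbTE; rewrite -leqNgt; lia.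
rewrite nth_cat ifT; last by lia.
by rewrite -E // ; congr nth; lia.
Qed.

Lemma occ_sub (P x Q s : seq A) i : occurs_at (P ++ x ++ Q) s i ->
  size P <= i -> i + size s <= size P + size x -> occurs_at x s (i - size P).
Proof.
move/occP=> [H E] H1 H2; apply/occP; split; first lia.
move=> k Hk; rewrite -E //.
rewrite nth_cat ifF; last by apply/negbTE; rewrite -leqNgt; lia.
rewrite nth_cat ifT; last by lia.
congr nth; lia.
Qed.

Lemma overlap (w s : seq A) i m : occurs_at w s i -> occurs_at w s m ->
  i < m -> m <= i + size s ->
  forall k, i <= k -> k + (m - i) < m + size s ->
  nth x0 w k = nth x0 w (k + (m - i)).
Proof.
move/occP=> [H1 E1] /occP [H2 E2] Him Hms k Hik Hk.
have -> : k = i + (k - i) by lia.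
rewrite E1; last by lia.
have -> : i + (k - i) + (m - i) = m + (k - i) by lia.
by rewrite E2 //; lia.
Qed.

Lemma covers_cat (a b s : seq A) : covers s (a ++ s) -> covers s (s ++ b) ->
  covers s (a ++ s ++ b).
Proof.
move=> Ha Hb j; rewrite !size_cat => Hj.
case: (ltnP j (size a + size s)) => Hjs.
- have [i [Hi Hij]] := Ha j ltac:(rewrite size_cat; lia).
  exists i; split => //.
  have := occ_cat [::] b Hi; rewrite /= add0n.
  by rewrite -catA.
- have [i [Hi /andP [Hij1 Hij2]]] := Hb (j - size a) ltac:(rewrite size_cat; lia).
  exists (size a + i); split; last by lia.
  have := occ_cat a [::] Hi; rewrite cats0.
  by [].
Qed.


Definition Zw (s : seq A) (p K : nat) := mkseq (fun k => nth x0 s (k %% p)) (K*p + size s).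

Lemma occ_Z (s : seq A) p K c : periodb s p -> c <= K -> occurs_at (Zw s p K) s (c*p).
Proof.
move=> Hs HcK; apply/occP; rewrite size_mkseq; split.
  by rewrite leq_add2r leq_mul2r HcK orbT.
move=> k Hk; rewrite nth_mkseq; last first.
  have : c * p <= K * p by rewrite leq_mul2r HcK orbT.
  lia.
by rewrite modnMDl (per_mod Hs Hk).
Qed.

Lemma covers_Z (s : seq A) p K : 0 < p -> p <= size s -> periodb s p ->
  covers s (Zw s p K).
Proof.
move=> Hp Hps Hs j; rewrite size_mkseq => Hj.
case: (ltnP j (K * p)) => HjK.
- exists ((j %/ p) * p); split.
    apply: occ_Z => //.
    have := divn_eq j p; have := ltn_pmod j Hp.
    move: (j %/ p) (j %% p) => q r Hr Ej.
    case: (leqP q K) => // HqK; exfalso.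
    have : K.+1 * p <= q * p by rewrite leq_mul2r HqK orbT.
    rewrite mulSn; lia.
  have := divn_eq j p; have := ltn_pmod j Hp.
  move: (j %/ p) (j %% p) => q r Hr Ej; lia.
- exists (K * p); split; first by apply: occ_Z.
  lia.
Qed.

Lemma Z_prefix (s Y : seq A) p K : 0 < p -> p <= size s -> periodb Y p ->
  take (size s) Y = s -> size s <= size Y -> size Y <= K * p + size s ->
  Y = take (size Y) (Zw s p K).
Proof.
move=> Hp Hps HY Hts H1 H2.
have Hsz : size (take (size Y) (Zw s p K)) = size Y.
  by rewrite size_take size_mkseq; case: (ltnP (size Y) (K * p + size s)) => ? //; lia.
apply: (eq_from_nth (x0:=x0) (esym Hsz)) => k Hk.
rewrite nth_take // nth_mkseq; last lia.
have Hkp : k %% p < p by apply: ltn_pmod.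
rewrite -Hts nth_take; last lia.
by apply: per_mod.
Qed.

Lemma Z_suffix (s X : seq A) p K : 0 < p -> p <= size s -> periodb X p ->
  drop (size X - size s) X = s -> size s <= size X -> size X <= K * p + size s ->
  X = drop (K * p + size s - size X) (Zw s p K).
Proof.
move=> Hp Hps HX Hds H1 H2.
have Hsz : size (drop (K * p + size s - size X) (Zw s p K)) = size X.
  by rewrite size_drop size_mkseq; lia.
apply: (eq_from_nth (x0:=x0) (esym Hsz)) => k Hk.
rewrite nth_drop nth_mkseq; last lia.
have Hkp : (K * p + size s - size X + k) %% p < p by apply: ltn_pmod.
have E m : nth x0 s m = nth x0 X (size X - size s + m) by rewrite -nth_drop Hds.
rewrite E.
apply: (per_eqmod HX) => //; first lia.
rewrite modnDmr.
have -> : size X - size s + (K * p + size s - size X + k) = K * p + k by lia.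
by rewrite modnMDl.
Qed.


Lemma nth_mid (P x Q : seq A) k : k < size x ->
  nth x0 (P ++ x ++ Q) (size P + k) = nth x0 x k.
Proof.
move=> Hk; rewrite nth_cat ifF; last by apply/negbTE; rewrite -leqNgt; lia.
rewrite nth_cat ifT; last by lia.
by congr nth; lia.
Qed.

Lemma per_self (s : seq A) : s != [::] -> per s <= size s.
Proof.
move=> Hs; apply/perle; exists (size s); split => //; apply/perP; split.
  by rewrite lt0n size_eq0.
move=> i Hi; lia.
Qed.

Lemma core (s L R : seq A) : s != [::] ->
  (forall i, occurs_at (L ++ s) s i -> size L <= i) ->
  (forall i, occurs_at (s ++ R) s i -> i = 0) ->
  (seed s (L ++ s ++ R) <-> maxn (per (L ++ s)) (per (s ++ R)) <= size s).
Proof.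
move=> Hs HL HR; have Hs0 : 0 < size s by rewrite lt0n size_eq0.
split.
- case=> _ [w [/infixP [P0 [Q0 Ew0]] Hcov]].
  have [P [Q Ew]] : exists P Q : seq A, w = P ++ (L ++ s ++ R) ++ Q by exists P0, Q0.
  clear P0 Q0 Ew0.
  have Hm : occurs_at w s (size P + size L).
    have H0 : occurs_at s s 0 by apply/occP; split => // k _.
    have := occ_cat (P ++ L) (R ++ Q) H0.
    by rewrite Ew -!catA size_cat addn0.
  have Hsw : size w = size P + size L + size s + size R + size Q.
    by rewrite Ew !size_cat !addnA.
  rewrite geq_max; apply/andP; split.
  + case: (eqVneq L [::]) => HL0.
      by rewrite HL0 cat0s; apply: per_self.
    have HL1 : 0 < size L by rewrite lt0n size_eq0.
    have [i [Hi /andP [Hij1 Hij2]]] := Hcov (size P + size L - 1) ltac:(lia).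
    case: (leqP (size P) i) => HiP.
      exfalso.
      have Hw : w = P ++ (L ++ s) ++ (R ++ Q) by rewrite Ew -!catA.
      rewrite Hw in Hi.
      have Hb : i + size s <= size P + size (L ++ s) by rewrite size_cat; lia.
      have Hx := HL _ (occ_sub Hi HiP Hb); lia.
    apply/perle; exists (size P + size L - i); split; last by lia.
    apply/perP; split; first lia.
    move=> k; rewrite size_cat => Hk.
    have Hw : w = P ++ (L ++ s) ++ (R ++ Q) by rewrite Ew -!catA.
    rewrite -(@nth_mid P (L ++ s) (R ++ Q)); last by rewrite size_cat; lia.
    rewrite -(@nth_mid P (L ++ s) (R ++ Q)); last by rewrite size_cat; lia.
    rewrite -Hw.
    rewrite (overlap Hi Hm); [|lia|lia|lia|lia].
    by congr nth; lia.
  + case: (eqVneq R [::]) => HR0.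
      by rewrite HR0 cats0; apply: per_self.
    have HR1 : 0 < size R by rewrite lt0n size_eq0.
    have [i [Hi /andP [Hij1 Hij2]]] := Hcov (size P + size L + size s) ltac:(lia).
    have Hw : w = (P ++ L) ++ (s ++ R) ++ Q by rewrite Ew -!catA.
    case: (leqP (i + size s) (size P + size L + size s + size R)) => HiP.
      exfalso.
      rewrite Hw in Hi.
      have Ha : size (P ++ L) <= i by rewrite size_cat; lia.
      have Hb : i + size s <= size (P ++ L) + size (s ++ R) by rewrite !size_cat; lia.
      have := HR _ (occ_sub Hi Ha Hb); rewrite size_cat; lia.
    apply/perle; exists (i - (size P + size L)); split; last by lia.
    apply/perP; split; first lia.
    move=> k; rewrite size_cat => Hk.
    rewrite -(@nth_mid (P ++ L) (s ++ R) Q); last by rewrite size_cat; lia.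
    rewrite -(@nth_mid (P ++ L) (s ++ R) Q); last by rewrite size_cat; lia.
    rewrite -Hw size_cat.
    rewrite (overlap Hm Hi); [|lia|lia|lia|lia].
    by congr nth; lia.
- rewrite geq_max => /andP [/perle [p1 [Hp1 Hp1s]] /perle [p2 [Hp2 Hp2s]]].
  have Hp10 : 0 < p1 by case/perP: Hp1.
  have Hp20 : 0 < p2 by case/perP: Hp2.
  have Hsp1 : periodb s p1.
    by have := per_drop (size L) Hp1; rewrite drop_size_cat.
  set K := size L + size R.
  have HK1 : K <= K * p1 by rewrite leq_pmulr.
  have HK2 : K <= K * p2 by rewrite leq_pmulr.
  have EX := Z_suffix Hp10 Hp1s Hp1 (K := K).
  rewrite size_cat addnK drop_size_cat // in EX.
  have {}EX := EX erefl ltac:(lia) ltac:(lia).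
  have EY := Z_prefix Hp20 Hp2s Hp2 (K := K).
  rewrite take_size_cat // size_cat in EY.
  have {}EY := EY erefl ltac:(lia) ltac:(lia).
  set Zl := Zw s p1 K in EX; set Zr := Zw s p2 K in EY.
  set e := (K * p1 + size s - (size L + size s)) in EX.
  set f := (size s + size R) in EY.
  have HZl : Zl = (take e Zl ++ L) ++ s by rewrite -catA EX cat_take_drop.
  have HZr : Zr = s ++ (R ++ drop f Zr) by rewrite catA EY cat_take_drop.
  have Hsp2 : periodb s p2.
    by have := per_take (size s) Hp2; rewrite take_size_cat.
  split; first by apply: infix_infix.
  exists ((take e Zl ++ L) ++ s ++ (R ++ drop f Zr)); split.
    apply/infixP; exists (take e Zl), (drop f Zr); by rewrite -!catA.
  apply: covers_cat.
    by rewrite -HZl; apply: covers_Z.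
  by rewrite -HZr; apply: covers_Z.
Qed.


Lemma occ_split (u s : seq A) i : occurs_at u s i ->
  u = take i u ++ s ++ drop (i + size s) u.
Proof.
case/andP => _ /eqP E.
have H : drop i u = s ++ drop (i + size s) u.
  by rewrite -{1}(cat_take_drop (size s) (drop i u)) E drop_drop addnC.
by rewrite -{1}(cat_take_drop i u) H.
Qed.

End W.

Unset Implicit Arguments.

Theorem fact1 (A : finType) (u s : seq A) :
  s != [::] -> infix s u ->
  (border_seed s u <->
   maxn (per (factor u 1 (firstpos u s + size s - 1)))
        (per (factor u (lastpos u s) (size u))) <= size s).
Proof.
move=> Hs /infixP [a0 [b0 Eu0]].
have [a [b Eu]] : exists a b : seq A, u = a ++ s ++ b by exists a0, b0.
clear a0 b0 Eu0.
have [x0 _] : exists x : A, True by case: s Hs Eu => [|x ?] //; exists x.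
have Hs0 : occurs_at s s 0 by apply/(occP x0); split => // k _.
have Hocc : occurs_at u s (size a).
  by have := occ_cat x0 a b Hs0; rewrite addn0 -Eu.
set n := size u.
have Hbnd : forall k, occurs_at u s k -> k + size s <= n by move=> k /andP [].
set f0 := find (occurs_at u s) (iota 0 n.+1).
have Hhas : has (occurs_at u s) (iota 0 n.+1).
  apply/hasP; exists (size a) => //; rewrite mem_iota add0n ltnS.
  have := Hbnd _ Hocc; lia.
have Hf0n : f0 < n.+1 by rewrite -[n.+1](size_iota 0) -has_find.
have Hf0 : occurs_at u s f0.
  by have := nth_find 0 Hhas; rewrite nth_iota // add0n.
have Hf0min : forall k, occurs_at u s k -> f0 <= k.
  move=> k Hk; rewrite leqNgt; apply/negP => Hlt.
  have := before_find 0 Hlt; rewrite nth_iota ?add0n ?Hk //; lia.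
have Hlast : forall k, occurs_at u s k -> k < n.+1.
  by move=> k Hk; have := Hbnd _ Hk; lia.
have [l0 Hl0 El0] : exists2 l0, occurs_at u s l0 & lastpos u s = l0.+1.
  rewrite /lastpos (bigmax_eq_arg (Ordinal (Hlast _ Hocc))) //.
  case: arg_maxnP => //= j Pj _; by exists j.
have Hl0max : forall k, occurs_at u s k -> k <= l0.
  move=> k Hk; have := El0; rewrite /lastpos => -[<-].
  by apply: (leq_bigmax_cond (Ordinal (Hlast _ Hk))).
have Hl0n := Hbnd _ Hl0; have Hf0b := Hbnd _ Hf0.
set L := take f0 u; set R := drop (l0 + size s) u.
have HsL : size L = f0 by rewrite size_takel //; lia.
have Ef := occ_split Hf0; have El := occ_split Hl0.
have E1 : factor u 1 (firstpos u s).-1 = L.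
  by rewrite /factor /firstpos /= subn1 drop0.
have E2 : factor u 1 (firstpos u s + size s - 1) = L ++ s.
  rewrite /factor /firstpos drop0.
  have -> : (f0.+1 + size s - 1).+1 - 1 = size L + size s by lia.
  by rewrite {1}Ef catA take_size_cat // size_cat.
have E3 : factor u (lastpos u s) n = s ++ R.
  rewrite /factor El0 /= take_oversize; last by rewrite size_drop; lia.
  rewrite {1}El drop_size_cat // size_takel //; lia.
have E4 : factor u (lastpos u s + size s) n = R.
  rewrite /factor El0 take_oversize; last by rewrite size_drop; lia.
  by congr drop; lia.
rewrite /border_seed /= E1 E4 E2 E3.
apply: (core x0) => //.
- move=> i Hi; rewrite HsL; apply: Hf0min.
  have := occ_cat x0 [::] (drop (f0 + size s) u) Hi.
  by rewrite /= add0n -catA -Ef.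
- move=> i Hi.
  have := occ_cat x0 (take l0 u) [::] Hi; rewrite cats0 -El => /Hl0max.
  rewrite size_takel; lia.
Qed.
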